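(* Let $k,\ell_1,\dots,\ell_k$ be positive integers. If $1\le i<k$ and $\ell_{i+1}>1$, then $$|\langle \ell_1,\dots,\ell_{i-1},\ell_i+1,\ell_{i+1}-1,\ell_{i+2},\dots,\ell_k\rangle| = |\langle\ell_1,\dots,\ell_k\rangle| + |\langle \ell_1,\dots,\ell_{i-1}\rangle|\cdot|\langle \ell_{i+1}-1,\ell_{i+2},\dots,\ell_k\rangle|;$$ moreover $$|\langle\ell_1,\dots,\ell_{k-1},\ell_k+1\rangle| = |\langle\ell_1,\dots,\ell_k\rangle| + |\langle\ell_1,\dots,\ell_{k-1}\rangle|;$$ and, if $\ell_1>1$ (and $k\ge 2$), $$|\langle\ell_1-1,\ell_2,\dots,\ell_k\rangle| = |\langle\ell_1,\dots,\ell_k\rangle| - |\langle\ell_1+\ell_2-1,\ell_3,\dots,\ell_k\rangle|.$$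
   Context: For a nonnegative integer $m$ and a tuple $(\ell_1,\dots,\ell_m)$ of integers with partial sums $L_i=\ell_1+\dots+\ell_i$, define $$\langle\ell_1,\dots,\ell_m\rangle=\{(x_0,x_1,\dots,x_m)\in\mathbb Z^{m+1}: x_0=0,\ x_{i-1}<x_i\le L_i \text{ for all } 1\le i\le m\}.$$ For $m=0$ (empty tuple) this set is $\{(0)\}$, of size $1$. *)

(* Defs.v *)
From mathcomp Require Import all_boot all_order all_algebra.
From mathcomp Require Import finmap.
From mathcomp Require Import boolp classical_sets cardinality.
Set Implicit Arguments. Unset Strict Implicit. Unset Printing Implicit Defensive.
Import Order.TTheory GRing.Theory Num.Theory.
Local Open Scope ring_scope.
Local Open Scope classical_set_scope.

(* Partial sum L_i = l_1 + ... + l_i of the tuple l (l_j = nth 0 l (j-1)). *)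
Definition psum (l : seq int) (i : nat) : int := \sum_(j < i) nth 0 l j.

(* The set <l_1,...,l_m> of integer tuples (x_0,...,x_m), encoded as
   sequences x of length m+1 with x_i = nth 0 x i. *)
Definition lset (l : seq int) : set (seq int) :=
  [set x | size x = (size l).+1 /\ nth 0 x 0 = 0 /\
     forall i : nat, (1 <= i <= size l)%N ->
       nth 0 x i.-1 < nth 0 x i /\ nth 0 x i <= psum l i].

Definition lcard (l : seq int) : nat := #|` fset_set (lset l)|.

(* Main.v *)
From mathcomp Require Import zify.
Require Import Defs.
From mathcomp Require Import all_boot all_order all_algebra.
From mathcomp Require Import finmap.
From mathcomp Require Import boolp classical_sets cardinality.
Import Order.TTheory GRing.Theory Num.Theory.
Local Open Scope ring_scope.

Fixpoint E (l : seq int) (c : nat) : seq (seq int) :=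
  if l is a :: l' then
    [seq 0 :: map (fun z => z + (k.+1)%:Z) y
       | k <- iota 0 (c + `|a|), y <- E l' (c + `|a| - k.+1)%N]
  else [:: [:: 0]].

Fixpoint h (l : seq int) (c : nat) : nat :=
  if l is a :: l' then (\sum_(t < c + `|a|) h l' t)%N else 1%N.

Definition lsetc (l : seq int) (c : nat) (x : seq int) : Prop :=
  size x = (size l).+1 /\ nth 0 x 0 = 0 /\
     forall i : nat, (1 <= i <= size l)%N ->
       nth 0 x i.-1 < nth 0 x i /\ nth 0 x i <= c%:Z + psum l i.

Lemma psumS a l i : psum (a :: l) i.+1 = a + psum l i.
Proof. by rewrite /psum big_ord_recl. Qed.

Lemma psum0 l : psum l 0 = 0.
Proof. by rewrite /psum big_ord0. Qed.

Lemma memE l c x : all (fun a => 0 <= a) l -> (x \in E l c) <-> lsetc l c x.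
Proof.
elim: l c x => [|a l IH] c x /=.
  move=> _; rewrite inE; split.
    move/eqP ->; split; first by [].
    by split; first by []; move=> i /= /andP[A B]; lia.
  case=> sx [x0 _]; case: x sx x0 => [|y [|z r]] //=.
  by move=> _ ->.
move=> /andP[a0 nnl]; split.
  case/allpairsPdep => k [y [kin yin ->]].
  have [sy [y0 Hy]] := (IH _ _ nnl).1 yin.
  move: kin; rewrite mem_iota add0n => /andP[_ kn].
  split; first by rewrite /= size_map sy.
  split => //.
  case => [|[|i]] //= Hi.
    rewrite psumS psum0 (nth_map 0); last by rewrite sy.
    rewrite y0; split; lia.
  have Hi' : (1 <= i.+1 <= size l)%N by [].
  have [H1 H2] := Hy _ Hi'.
  rewrite psumS !(nth_map 0) ?sy //=; last by lia.
  split; first by rewrite ltrD2r.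
  move: H2 => /=; lia.
case=> sx [x0 Hx].
case: x sx x0 Hx => [|x0' [|x1 r]] //= [sr] -> Hx.
have [H01 H11] := Hx 1%N (ltac:(by [])).
move: H01 H11 => /= H01; rewrite psumS psum0 => H11.
apply/allpairsPdep.
exists (`|x1|.-1)%N, (map (fun z => z - x1) (x1 :: r)).
have k1 : ((`|x1|.-1).+1)%:Z = x1 by lia.
split.
- rewrite mem_iota; lia.
- apply/(IH _ _ nnl); split; first by rewrite size_map /= sr.
  split; first by rewrite /= subrr.
  move=> i Hi.
  have Hi2 : (1 <= i.+1 <= (size l).+1)%N by rewrite /= ltnS; case/andP: Hi.
  have [A B] := Hx _ Hi2.
  move: A B; rewrite psumS /=.
  case: i Hi Hi2 => [|i] //= Hi _.
  rewrite -[x1 - x1 :: _]/(map (fun z => z - x1) (x1 :: r)) (nth_map 0); last by rewrite /= sr ltnS ltnW.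
  rewrite (nth_map 0) ?sr //; move=> A B; split; first by rewrite ltrD2r.
  have E1 : ((c + `|a| - `|x1|.-1.+1)%N)%:Z = c%:Z + a - x1 by lia.
  rewrite E1; apply: le_trans (lerB B (lexx x1)) _; lia.
- rewrite k1 -map_comp map_id_in // => z _ /=; by rewrite subrK.
Qed.

Lemma uniqE l c : all (fun a => 0 <= a) l -> uniq (E l c).
Proof.
elim: l c => [|a l IH] c //= /andP[a0 nnl].
apply: allpairs_uniq_dep; first exact: iota_uniq.
  by move=> k _; apply: IH.
move=> [k1 y1] [k2 y2] /allpairsPdep [k1' [y1' [_ Hy1 E1]]]
  /allpairsPdep [k2' [y2' [_ Hy2 E2]]].
case: E1 => ek1 ey1; case: E2 => ek2 ey2; subst.
rename k1' into k1; rename k2' into k2; rename y1' into y1; rename y2' into y2.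
have [sy1 [y10 _]] := (memE _ _ (y1) nnl).1 Hy1.
have [sy2 [y20 _]] := (memE _ _ (y2) nnl).1 Hy2.
case: y1 sy1 y10 {Hy1} => [|u1 t1] // _ /= ->.
case: y2 sy2 y20 {Hy2} => [|u2 t2] // _ /= ->.
rewrite /= !add0r => -[Ek Et].
have ek : k1 = k2 by lia.
subst k2; congr existT; congr cons.
by move/(inj_map (@addIr _ _)): Et.
Qed.

Lemma sizeE l c : size (E l c) = h l c.
Proof.
elim: l c => [|a l IH] c //=.
rewrite size_allpairs_dep sumnE big_map.
set n := (c + `|a|)%N.
under eq_bigr do rewrite IH.
have -> : iota 0 n = index_iota 0 n by rewrite /index_iota subn0.
rewrite big_nat_rev -(big_mkord xpredT).
apply: eq_big_nat => k /andP[_ kn]; congr h; lia.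
Qed.

Lemma lcardE l : all (fun a => 0 <= a) l -> lcard l = h l 0.
Proof.
move=> nnl; rewrite /lcard.
have -> : lset l = [set` [fset x | x in E l 0]%fset]%classic.
  rewrite predeqE => x /=; rewrite inE /= memE // /lsetc.
  split; case=> A [B C]; split => //; split => // i Hi; have := C i Hi;
    by rewrite add0r.
by rewrite set_fsetK card_fseq undup_id ?uniqE ?sizeE.
Qed.

Lemma sum1 n : (\sum_(t < n) 1)%N = n.
Proof. elim: n => [|n IHn]; first by rewrite big_ord0. by rewrite big_ord_recr IHn /= addn1. Qed.

Lemma h_last p a c : 0 <= a ->
  h (rcons p (a + 1)) c = (h (rcons p a) c + h p c)%N.
Proof.
move=> a0; elim: p c => [|b p IH] c /=.
  rewrite !sum1; lia.
by rewrite -big_split; apply: eq_bigr => t _; rewrite IH.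
Qed.

Lemma h_mid p a b r c : 0 <= a -> 1 <= b ->
  h (p ++ (a + 1) :: (b - 1) :: r) c
  = (h (p ++ a :: b :: r) c + h p c * h ((b - 1)%R :: r) 0)%N.
Proof.
move=> a0 b1; elim: p c => [|q p IH] c /=.
  have -> : (c + `|(a + 1)%R|)%N = (c + `|a|).+1 by lia.
  rewrite big_ord_recl /= mul1n addnC; congr (_ + _)%N.
  apply: eq_bigr => t _.
  have -> : (bump 0 t + `|(b - 1)%R|)%N = (t + `|b|)%N by rewrite /bump /=; lia.
  by [].
rewrite big_distrl /= -big_split; apply: eq_bigr => t _; by rewrite IH.
Qed.

Lemma h_first a1 a2 r : 1 < a1 -> 0 <= a2 ->
  (h (a1 :: a2 :: r) 0 = h ((a1 - 1)%R :: a2 :: r) 0 + h ((a1 + a2 - 1)%R :: r) 0)%N.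
Proof.
move=> a1p a2p /=.
have -> : `|a1|%N = (`|a1 - 1|).+1 by lia.
rewrite big_ord_recr /=; congr (_ + _)%N.
have -> : (`|(a1 - 1)%R| + `|a2|)%N = `|(a1 + a2 - 1)%R|%N by lia.
by [].
Qed.

(* l = [:: l_1; ...; l_k] with k = size l; l_j = nth 0 l (j-1). *)
Theorem lemma4p2 (l : seq int) :
  (1 <= size l)%N -> all (fun a => 0 < a) l ->
  (forall i : nat, (1 <= i < size l)%N -> 1 < nth 0 l i ->
     lcard (take i.-1 l ++ (nth 0 l i.-1 + 1) :: (nth 0 l i - 1) :: drop i.+1 l)
     = (lcard l + lcard (take i.-1 l) * lcard ((nth 0 l i - 1)%R :: drop i.+1 l))%N)
  /\
  lcard (rcons (take (size l).-1 l) (nth 0 l (size l).-1 + 1))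
    = (lcard l + lcard (take (size l).-1 l))%N
  /\
  ((2 <= size l)%N -> 1 < nth 0 l 0 ->
     (lcard ((nth 0 l 0 - 1) :: behead l))%:Z
     = (lcard l)%:Z - (lcard ((nth 0 l 0 + nth 0 l 1 - 1) :: drop 2 l))%:Z).
Proof.
move=> sl lpos.
have nnl : all (fun a => 0 <= a) l.
  by apply/allP => x /(allP lpos) /=; apply: ltW.
have pos j : (j < size l)%N -> 0 < nth 0 l j.
  by move=> js; apply: (allP lpos); apply: mem_nth.
have nnsub s : {subset s <= l} -> all (fun a => 0 <= a) s.
  by move=> ss; apply/allP => x /ss /(allP nnl).
split.
  move=> i /andP[i1 il] bi.
  have ai' : (i.-1 < size l)%N by lia.
  have ai := pos _ ai'.
  have El : l = take i.-1 l ++ nth 0 l i.-1 :: nth 0 l i :: drop i.+1 l.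
    rewrite -(drop_nth 0 il).
    have -> : drop i l = drop i.-1.+1 l by rewrite prednK.
    by rewrite -(drop_nth 0 ai') cat_take_drop.
  have nnp : all (fun a => 0 <= a) (take i.-1 l) by apply: nnsub => x /mem_take.
  have nnr : all (fun a => 0 <= a) (drop i.+1 l) by apply: nnsub => x /mem_drop.
  have H1 : all (fun a => 0 <= a) ((nth 0 l i - 1)%R :: drop i.+1 l).
    by rewrite /= nnr andbT subr_ge0 ltW.
  have H2 : all (fun a => 0 <= a)
      (take i.-1 l ++ (nth 0 l i.-1 + 1) :: (nth 0 l i - 1) :: drop i.+1 l).
    by rewrite all_cat nnp /= nnr andbT subr_ge0 (ltW bi) addr_ge0 // ltW.
  rewrite (lcardE _ nnl) (lcardE _ nnp) (lcardE _ H1) (lcardE _ H2).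
  by rewrite [in h l 0]El h_mid // ?ltW // ltW.
split.
  have ln : ((size l).-1 < size l)%N by lia.
  have El : l = rcons (take (size l).-1 l) (nth 0 l (size l).-1).
    rewrite -cats1 -{1}(cat_take_drop (size l).-1 l) (drop_nth 0 ln).
    by rewrite drop_oversize // prednK.
  have nnp : all (fun a => 0 <= a) (take (size l).-1 l) by apply: nnsub => x /mem_take.
  have aa := pos _ ln.
  have H1 : all (fun a => 0 <= a) (rcons (take (size l).-1 l) (nth 0 l (size l).-1 + 1)).
    by rewrite -cats1 all_cat nnp /= andbT addr_ge0 // ltW.
  rewrite (lcardE _ nnl) (lcardE _ nnp) (lcardE _ H1).
  by rewrite [in h l 0]El h_last // ltW.
case: l sl lpos nnl pos nnsub => [|a1 [|a2 r]] //= _ /andP[a1p /andP[a2p rp]] nnl pos nnsub _ a1g.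
have nnr : all (fun a => 0 <= a) r by apply: nnsub => x xr; rewrite !inE xr !orbT.
have H1 : all (fun a => 0 <= a) [:: a1 - 1, a2 & r].
  by rewrite /= nnr (ltW a2p) subr_ge0 ltW.
have H2 : all (fun a => 0 <= a) ((a1 + a2 - 1) :: r).
  by rewrite /= nnr andbT -addrA addr_ge0 ?subr_ge0 // ltW.
rewrite drop0 (lcardE [:: a1, a2 & r] nnl) (lcardE _ H1) (lcardE _ H2).
rewrite (h_first _ _ r a1g (ltW a2p)) PoszD addrK.
by [].
Qed.
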